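(* Fix $T>0$. For $a\in\mathbb{R}$ with $aT<1$, let $k_u(a)$ denote the unique solution $k>|a|$ of $$T\sqrt{k^2-a^2}=\arccos\!\left(\frac{a}{k}\right).$$ Then $a\mapsto k_u(a)$ is decreasing and convex on $(-\infty,1/T)$, and $$\lim_{a\to-\infty}\frac{k_u(a)}{|a|}=1,\qquad \lim_{a\to 1/T}k_u(a)=\frac1T .$$
   Context: Consider the scalar retarded system $\dot x(t)=a x(t)-k x(t-T)$ with $a,k\in\mathbb{R}$ and constant delay $T>0$. For $aT<1$, the set of gains $k$ for which this system is exponentially stable is exactly the open interval $(a,k_u)$, where $k_u$ is defined as in the claim. (For $aT\ge 1$ no stabilizing $k$ exists.) *)

(* Defs.v *)
From Stdlib Require Import Reals.
From Coquelicot Require Import Coquelicot.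
Open Scope R_scope.

Definition ku_eq (T a k : R) : Prop :=
  Rabs a < k /\ T * sqrt (k ^ 2 - a ^ 2) = acos (a / k).

Definition decreasing_below (f : R -> R) (b : R) : Prop :=
  forall x y, x < y -> y < b -> f y < f x.

Definition convex_below (f : R -> R) (b : R) : Prop :=
  forall x y t, x < b -> y < b -> 0 <= t <= 1 ->
    f (t * x + (1 - t) * y) <= t * f x + (1 - t) * f y.

(* Main.v *)
Require Import Defs.
From Stdlib Require Import Reals Lra Psatz Ranalysis5.
From Coquelicot Require Import Coquelicot.
Open Scope R_scope.

Lemma incr_strict (f df : R -> R) (a b : R) : a < b ->
  (forall x, a <= x <= b -> is_derive f x (df x)) ->
  (forall x, a < x < b -> 0 < df x) -> f a < f b.
Proof.
intros Hab Hd Hp.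
destruct (MVT_cor2 f df a b Hab) as [c [Hc1 Hc2]].
- intros c Hc; apply is_derive_Reals; auto.
- assert (0 < df c) by (apply Hp; lra). nra.
Qed.

Lemma incr_weak (f df : R -> R) (a b : R) : a <= b ->
  (forall x, a <= x <= b -> is_derive f x (df x)) ->
  (forall x, a < x < b -> 0 <= df x) -> f a <= f b.
Proof.
intros Hab Hd Hp. destruct (Req_dec a b) as [->|Hne]; [lra|].
destruct (MVT_cor2 f df a b) as [c [Hc1 Hc2]]; [lra| |].
- intros c Hc; apply is_derive_Reals; auto.
- assert (0 <= df c) by (apply Hp; lra). nra.
Qed.

Lemma pos_from0 (f df : R -> R) (x : R) : 0 <= x ->
  (forall y, is_derive f y (df y)) -> f 0 = 0 ->
  (forall y, 0 <= y -> 0 <= df y) -> 0 <= f x.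
Proof.
intros Hx Hd H0 Hp. rewrite <- H0.
apply (incr_weak f df); auto. intros y Hy; apply Hp; lra.
Qed.

Lemma t1 x : 0 <= x -> 0 <= x - sin x.
Proof. intro Hx.
apply (pos_from0 (fun x => x - sin x) (fun x => 1 - cos x)); auto.
- intro y; auto_derive; auto; try ring; try field.
- rewrite sin_0; ring.
- intros y _; pose proof (COS_bound y); lra.
Qed.

Lemma t2 x : 0 <= x -> 0 <= cos x - 1 + x^2/2.
Proof. intro Hx.
apply (pos_from0 (fun x => cos x - 1 + x^2/2) (fun x => x - sin x)); auto.
- intro y; auto_derive; auto; try ring; try field.
- rewrite cos_0; field.
- apply t1.
Qed.

Lemma t3 x : 0 <= x -> 0 <= sin x - x + x^3/6.
Proof. intro Hx.
apply (pos_from0 (fun x => sin x - x + x^3/6) (fun x => cos x - 1 + x^2/2)); auto.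
- intro y; auto_derive; auto; try ring; try field.
- rewrite sin_0; field.
- apply t2.
Qed.

Lemma t4 x : 0 <= x -> 0 <= 1 - x^2/2 + x^4/24 - cos x.
Proof. intro Hx.
apply (pos_from0 (fun x => 1 - x^2/2 + x^4/24 - cos x) (fun x => sin x - x + x^3/6)); auto.
- intro y; auto_derive; auto; try ring; try field.
- rewrite cos_0; field.
- apply t3.
Qed.

Lemma t5 x : 0 <= x -> 0 <= x - x^3/6 + x^5/120 - sin x.
Proof. intro Hx.
apply (pos_from0 (fun x => x - x^3/6 + x^5/120 - sin x) (fun x => 1 - x^2/2 + x^4/24 - cos x)); auto.
- intro y; auto_derive; auto; try ring; try field.
- rewrite sin_0; field.
- apply t4.
Qed.

Lemma t6 x : 0 <= x -> 0 <= cos x - (1 - x^2/2 + x^4/24 - x^6/720).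
Proof. intro Hx.
apply (pos_from0 (fun x => cos x - (1 - x^2/2 + x^4/24 - x^6/720)) (fun x => x - x^3/6 + x^5/120 - sin x)); auto.
- intro y; auto_derive; auto; try ring; try field.
- rewrite cos_0; field.
- apply t5.
Qed.

Lemma t7 x : 0 <= x -> 0 <= sin x - (x - x^3/6 + x^5/120 - x^7/5040).
Proof. intro Hx.
apply (pos_from0 (fun x => sin x - (x - x^3/6 + x^5/120 - x^7/5040)) (fun x => cos x - (1 - x^2/2 + x^4/24 - x^6/720))); auto.
- intro y; auto_derive; auto; try ring; try field.
- rewrite sin_0; field.
- apply t6.
Qed.

Lemma Qpos u : 0 < u -> 0 < u^2 + u * sin u + 4 * cos u - 4.
Proof. intro Hu.
destruct (Rle_lt_dec u (37/10)) as [H|H].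
- pose proof (t7 u ltac:(lra)); pose proof (t6 u ltac:(lra)).
  assert (u * sin u >= u * (u - u^3/6 + u^5/120 - u^7/5040)) by nra.
  assert (0 < u^6) by (apply pow_lt; lra).
  assert (u^2 < 14) by nra.
  nra.
- pose proof (SIN_bound u); pose proof (COS_bound u). nra.
Qed.

Lemma Ppos t : 0 < t -> 0 < t^2 + t * sin t * cos t - 2 * (sin t)^2.
Proof. intro Ht. pose proof (Qpos (2*t) ltac:(lra)) as H.
rewrite sin_2a, cos_2a_sin in H. nra.
Qed.
Definition Af t := t * cos t / sin t.
Definition Bf t := t / sin t.
Definition Nf t := sin t - t * cos t.
Definition Df t := t - sin t * cos t.
Definition rf t := (sin t - t * cos t) / (t - sin t * cos t).

Lemma sc1 t : sin t ^ 2 + cos t ^ 2 = 1.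
Proof. pose proof (sin2_cos2 t). unfold Rsqr in *. nra. Qed.

Lemma dA t : sin t <> 0 -> is_derive Af t (- Df t / sin t ^ 2).
Proof. intro H. unfold Af, Df. auto_derive; auto.
pose proof (sc1 t). field_simplify; auto. f_equal.
transitivity (cos t * sin t - t * (sin t ^ 2 + cos t ^ 2)); [ring | rewrite H0; ring]. Qed.

Lemma dB t : sin t <> 0 -> is_derive Bf t (Nf t / sin t ^ 2).
Proof. intro H. unfold Bf, Nf. auto_derive; auto. field; auto. Qed.

Lemma dN t : is_derive Nf t (t * sin t).
Proof. unfold Nf. auto_derive; auto. ring. Qed.

Lemma dr t : t - sin t * cos t <> 0 ->
  is_derive rf t (sin t * (t^2 + t * sin t * cos t - 2 * (sin t)^2) / (t - sin t * cos t)^2).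
Proof. intro H. unfold rf. auto_derive; auto.
pose proof (sc1 t). field_simplify; auto. f_equal.
transitivity (cos t * t * sin t ^ 2 + t ^ 2 * sin t - 2 * sin t ^ 3 + (sin t - cos t * t) * (sin t ^ 2 + cos t ^ 2 - 1)); [ring | rewrite H0; ring].
Qed.

Lemma sinpos t : 0 < t < PI -> 0 < sin t.
Proof. intro; apply sin_gt_0; lra. Qed.

Lemma Dpos t : 0 < t -> 0 < Df t.
Proof. intro H. unfold Df. pose proof (sin_lt_x (2*t) ltac:(lra)).
rewrite sin_2a in H0. lra. Qed.

Lemma Npos t : 0 < t < PI -> 0 < Nf t.
Proof. intro H. replace 0 with (Nf 0) by (unfold Nf; rewrite sin_0; ring).
apply (incr_strict Nf (fun y => y * sin y)); try lra.
- intros; apply dN.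
- intros y Hy. pose proof (sinpos y ltac:(lra)). nra.
Qed.

Lemma rmono c2 c1 : 0 < c2 -> c2 <= c1 -> c1 < PI -> rf c2 <= rf c1.
Proof. intros H1 H2 H3.
apply (incr_weak rf (fun t => sin t * (t^2 + t * sin t * cos t - 2 * (sin t)^2) / (t - sin t * cos t)^2)); auto.
- intros x Hx; apply dr. pose proof (Dpos x ltac:(lra)). unfold Df in *; lra.
- intros x Hx. pose proof (sinpos x ltac:(lra)). pose proof (Ppos x ltac:(lra)).
  pose proof (Dpos x ltac:(lra)). unfold Df in *.
  apply Rlt_le, Rdiv_lt_0_compat; [nra | apply pow_lt; lra].
Qed.

Lemma Adec x y : 0 < x -> x < y -> y < PI -> Af y < Af x.
Proof. intros. cut (- Af x < - Af y); [lra|].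
apply (incr_strict (fun t => - Af t) (fun t => Df t / sin t ^ 2)); auto.
- intros t Ht. replace (Df t / sin t ^ 2) with (- (- Df t / sin t ^ 2)) by (field; pose proof (sinpos t ltac:(lra)); lra).
  apply is_derive_Reals; apply (derivable_pt_lim_opp Af); apply is_derive_Reals, dA. pose proof (sinpos t ltac:(lra)); lra.
- intros t Ht. pose proof (sinpos t ltac:(lra)). pose proof (Dpos t ltac:(lra)).
  apply Rdiv_lt_0_compat; [lra | apply pow_lt; lra].
Qed.

Lemma Binc x y : 0 < x -> x < y -> y < PI -> Bf x < Bf y.
Proof. intros.
apply (incr_strict Bf (fun t => Nf t / sin t ^ 2)); auto.
- intros t Ht. apply dB. pose proof (sinpos t ltac:(lra)); lra.
- intros t Ht. pose proof (sinpos t ltac:(lra)). pose proof (Npos t ltac:(lra)).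
  apply Rdiv_lt_0_compat; [lra | apply pow_lt; lra].
Qed.

Lemma cauchy x y : 0 < x -> x < y -> y < PI ->
  exists c, x < c < y /\ Bf y - Bf x = (Af x - Af y) * rf c.
Proof. intros.
set (h := fun t => (Af y - Af x) * Bf t - (Bf y - Bf x) * Af t).
destruct (MVT_cor2 h (fun t => (Af y - Af x) * (Nf t / sin t ^ 2) - (Bf y - Bf x) * (- Df t / sin t ^ 2)) x y) as [c [Hc1 Hc2]]; auto.
- intros c Hc. unfold h.
  pose proof (sinpos c ltac:(lra)).
  apply (derivable_pt_lim_minus (fun t => (Af y - Af x) * Bf t) (fun t => (Bf y - Bf x) * Af t));
  apply derivable_pt_lim_scal; apply is_derive_Reals; [apply dB|apply dA]; lra.
- exists c; split; auto.
  assert (h y - h x = 0) by (unfold h; ring).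
  pose proof (sinpos c ltac:(lra)). pose proof (Dpos c ltac:(lra)).
  assert (E: (Af y - Af x) * Nf c + (Bf y - Bf x) * Df c = 0).
  { assert ((Af y - Af x) * (Nf c / sin c ^ 2) - (Bf y - Bf x) * (- Df c / sin c ^ 2) = 0).
    { assert (y - x <> 0) by lra. rewrite Hc1 in H2. 
      apply (Rmult_eq_reg_r (y - x)); auto. lra. }
    assert (0 < sin c ^ 2) by (apply pow_lt; lra).
    apply (Rmult_eq_reg_r (/ sin c ^ 2)); [| apply Rinv_neq_0_compat; lra].
    rewrite Rmult_0_l. rewrite <- H5. field. lra. }
  unfold rf. unfold Nf, Df in E. unfold Df in H4.
  apply (Rmult_eq_reg_r (c - sin c * cos c)); [|lra].
  field_simplify; [|lra]. lra.
Qed.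


Lemma PIgt3 : 3 < PI.
Proof. pose proof PI2_3_2; lra. Qed.

Lemma param T a k : 0 < T -> ku_eq T a k ->
  exists th, 0 < th < PI /\ T * a = Af th /\ T * k = Bf th.
Proof.
intros HT [Hk He].
assert (Hk0 : 0 < k) by (pose proof (Rabs_pos a); lra).
destruct (Rabs_def2 _ _ Hk) as [Ha1 Ha2].
assert (Hx : -1 < a / k < 1).
{ split; [apply (Rmult_lt_reg_r k); auto; field_simplify; lra|].
  apply (Rmult_lt_reg_r k); auto; field_simplify; lra. }
exists (acos (a / k)). pose proof (acos_bound_lt _ Hx) as Hb.
split; auto.
pose proof (cos_acos (a/k) ltac:(lra)) as Hc.
pose proof (sin_acos (a/k) ltac:(lra)) as Hs.
assert (Hsq : sqrt (k ^ 2 - a ^ 2) = k * sqrt (1 - (a/k)²)).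
{ replace (k ^ 2 - a ^ 2) with (k² * (1 - (a/k)²)) by (unfold Rsqr; field; lra).
  rewrite sqrt_mult; [|apply Rle_0_sqr|].
  - rewrite sqrt_Rsqr; lra.
  - unfold Rsqr. nra. }
pose proof (sinpos _ Hb) as Hsp.
rewrite <- Hs in Hsq. rewrite Hsq in He.
unfold Af, Bf. rewrite Hc. set (th := acos (a / k)) in *. split.
- replace th with (T * (k * sin th)) at 1 by exact He. field; lra.
- replace th with (T * (k * sin th)) at 1 by exact He. field; lra.
Qed.

Lemma fromparam T a th : 0 < T -> 0 < th < PI -> T * a = Af th -> ku_eq T a (Bf th / T).
Proof.
intros HT Hth Ha. pose proof (sinpos _ Hth) as Hs. pose proof (sc1 th) as S.
unfold Af, Bf in *.
assert (Hk : 0 < th / sin th / T) by (repeat apply Rdiv_lt_0_compat; lra).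
assert (Ea : a = th / sin th / T * cos th) by (apply (Rmult_eq_reg_l T); [|lra]; rewrite Ha; field; lra).
assert (Hc : cos th ^ 2 < 1) by nra.
split.
- rewrite Ea. apply Rabs_def1.
  + assert (cos th < 1) by nra. nra.
  + assert (-1 < cos th) by nra. nra.
- replace (a / (th / sin th / T)) with (cos th) by (rewrite Ea; field; split; lra).
  rewrite acos_cos by lra.
  replace ((th / sin th / T) ^ 2 - a ^ 2) with ((th / T)²).
  + rewrite sqrt_Rsqr; [field; lra|]. apply Rlt_le, Rdiv_lt_0_compat; lra.
  + rewrite Ea. unfold Rsqr. field_simplify; [|lra|lra].
    replace (- th ^ 2 * cos th ^ 2 + th ^ 2) with (th ^ 2 * (1 - cos th ^2)) by ring.
    replace (1 - cos th ^ 2) with (sin th ^ 2) by lra. field. lra.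
Qed.

Lemma Acont t : 0 < t < PI -> continuity_pt Af t.
Proof. intro H. apply derivable_continuous_pt. exists (- Df t / sin t ^ 2).
apply is_derive_Reals, dA. pose proof (sinpos t H); lra. Qed.

Lemma Aexists y : y < 1 -> exists th, 0 < th < PI /\ Af th = y.
Proof.
intro Hy. pose proof PIgt3. pose proof PI_4.
set (u1 := Rmin 1 (1 - y)).
assert (Ht1 : 0 < u1 <= 1 /\ u1 <= 1 - y) by (unfold u1; split; [split|]; [apply Rmin_glb_lt|apply Rmin_l|apply Rmin_r]; lra).
set (e := / (Rabs y + 2)).
assert (He : 0 < e <= 1/2).
{ pose proof (Rabs_pos y). unfold e. split; [apply Rinv_0_lt_compat; lra|].
  apply (Rmult_le_reg_r (Rabs y + 2)); [lra|]. rewrite Rinv_l; lra. }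
set (u2 := PI - e).
assert (A1 : y < Af u1).
{ pose proof (t2 u1 ltac:(lra)). pose proof (t1 u1 ltac:(lra)).
  pose proof (sinpos u1 ltac:(lra)). assert (0 < cos u1) by (apply cos_gt_0; lra).
  unfold Af. apply (Rmult_lt_reg_r (sin u1)); auto. field_simplify; [|lra]. nra. }
assert (A2 : Af u2 < y).
{ unfold Af, u2. rewrite sin_PI_x, Rtrigo_facts.cos_pi_minus.
  pose proof (t2 e ltac:(lra)). pose proof (t1 e ltac:(lra)).
  pose proof (sinpos e ltac:(lra)).
  assert (Ey : - / e < y).
  { unfold e. rewrite Rinv_inv. destruct (Rcase_abs y); [rewrite Rabs_left|rewrite Rabs_right]; lra. }
  assert (Hcos: 1 <= (PI - e) * cos e) by nra.
  assert (Hinv: / e <= / sin e) by (apply Rinv_le_contravar; lra).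
  assert (Hie: 0 < / e) by (apply Rinv_0_lt_compat; lra).
  unfold Rdiv. nra. }
destruct (IVT_interv (fun t => y - Af t) u1 u2) as [z [Hz1 Hz2]].
- intros t Ht. apply continuity_pt_minus; [apply continuity_pt_const; intros ? ?; auto|].
  apply Acont; unfold u2 in *; lra.
- unfold u2; lra.
- lra.
- lra.
- exists z; split; [unfold u2 in *; lra | lra].
Qed.

Lemma Ainj x y : 0 < x < PI -> 0 < y < PI -> Af x = Af y -> x = y.
Proof. intros Hx Hy E. destruct (Rtotal_order x y) as [H|[H|H]]; auto.
- pose proof (Adec x y ltac:(lra) H ltac:(lra)); lra.
- pose proof (Adec y x ltac:(lra) H ltac:(lra)); lra.
Qed.

Lemma ord x y : 0 < x < PI -> 0 < y < PI -> Af x < Af y -> y < x.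
Proof. intros Hx Hy E. destruct (Rtotal_order x y) as [H|[H|H]]; auto.
- pose proof (Adec x y ltac:(lra) H ltac:(lra)); lra.
- subst; lra.
Qed.

Lemma kbound T a k : 0 < T -> ku_eq T a k -> k <= Rabs a + PI / T.
Proof. intros HT [Hk He].
pose proof (acos_bound (a / k)) as Hb.
assert (Hs : sqrt (k^2 - a^2) <= PI / T).
{ apply (Rmult_le_reg_l T); auto. rewrite He. field_simplify; lra. }
assert (Hp : 0 <= k^2 - a^2).
{ pose proof (Rabs_pos a). replace (a^2) with (Rabs a ^ 2) by (first [apply pow2_abs | symmetry; apply pow2_abs]). nra. }
pose proof (sqrt_sqrt _ Hp). pose proof (sqrt_pos (k^2 - a^2)).
assert (k^2 - a^2 <= (PI/T)^2) by nra.
assert (0 < PI / T) by (apply Rdiv_lt_0_compat; [apply PI_RGT_0|auto]).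
replace (a^2) with (Rabs a ^ 2) in H1 by (first [apply pow2_abs | symmetry; apply pow2_abs]).
pose proof (Rabs_pos a). nra.
Qed.

Lemma kpa T a k : 0 < T -> ku_eq T a k -> T * (k + a) <= 2.
Proof. intros HT Hk.
destruct (param T a k HT Hk) as [th [Hth [Ha Hkk]]].
replace (T * (k + a)) with (Bf th + Af th) by lra.
unfold Af, Bf.
set (x := th / 2). replace th with (2 * x) by (unfold x; field).
assert (Hx : 0 < x < PI / 2) by (unfold x; lra).
rewrite sin_2a, cos_2a_cos.
assert (0 < cos x) by (apply cos_gt_0; lra).
assert (0 < sin x) by (apply sinpos; lra).
pose proof (Npos x ltac:(lra)). unfold Nf in H1.
apply (Rmult_le_reg_r (2 * sin x * cos x)); [nra|].
field_simplify; try lra. nra.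
Qed.

Lemma core T ku x z y : 0 < T ->
  (forall a : R, a * T < 1 -> ku_eq T a (ku a)) ->
  x < z -> z < y -> y < / T ->
  (ku z - ku x) * (y - z) <= (ku y - ku z) * (z - x).
Proof.
intros HT Hku H1 H2 H3.
assert (L : forall a, a < / T -> a * T < 1).
{ intros a Ha. apply (Rmult_lt_compat_r T) in Ha; auto. rewrite Rinv_l in Ha; lra. }
destruct (param T x (ku x) HT (Hku x (L x ltac:(lra)))) as [tx [Htx [Ax Bx]]].
destruct (param T z (ku z) HT (Hku z (L z ltac:(lra)))) as [tz [Htz [Az Bz]]].
destruct (param T y (ku y) HT (Hku y (L y ltac:(lra)))) as [ty [Hty [Ay By]]].
assert (O1 : tz < tx) by (apply ord; auto; rewrite <- Ax, <- Az; nra).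
assert (O2 : ty < tz) by (apply ord; auto; rewrite <- Ay, <- Az; nra).
destruct (cauchy tz tx ltac:(lra) O1 ltac:(lra)) as [c1 [Hc1 E1]].
destruct (cauchy ty tz ltac:(lra) O2 ltac:(lra)) as [c2 [Hc2 E2]].
pose proof (rmono c2 c1 ltac:(lra) ltac:(lra) ltac:(lra)) as Hr.
set (p := Af tz - Af tx). set (q := Af ty - Af tz).
assert (Hp : 0 < p) by (unfold p; rewrite <- Ax, <- Az; nra).
assert (Hq : 0 < q) by (unfold q; rewrite <- Ay, <- Az; nra).
assert (Hpq : 0 <= p * q * (rf c1 - rf c2)) by (apply Rmult_le_pos; nra).
apply (Rmult_le_reg_r (T * T)); [nra|].
replace ((ku z - ku x) * (y - z) * (T * T)) with ((T * ku z - T * ku x) * (T * y - T * z)) by ring.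
replace ((ku y - ku z) * (z - x) * (T * T)) with ((T * ku y - T * ku z) * (T * z - T * x)) by ring.
rewrite Ax, Az, Ay, Bx, Bz, By.
replace (Bf tz - Bf tx) with (- (p * rf c1)) by (unfold p; lra).
replace (Bf ty - Bf tz) with (- (q * rf c2)) by (unfold q; lra).
fold q. replace (Af tz - Af tx) with p by reflexivity. nra.
Qed.

Theorem proposition1 (T : R) (HT : 0 < T) :
  (forall a : R, a * T < 1 -> exists! k : R, ku_eq T a k) /\
  (forall ku : R -> R,
     (forall a : R, a * T < 1 -> ku_eq T a (ku a)) ->
     decreasing_below ku (/ T) /\
     convex_below ku (/ T) /\
     is_lim (fun a => ku a / Rabs a) m_infty 1 /\
     filterlim ku (at_left (/ T)) (locally (/ T))).
Proof.
assert (L : forall a, a < / T -> a * T < 1).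
{ intros a Ha. apply (Rmult_lt_compat_r T) in Ha; auto. rewrite Rinv_l in Ha; lra. }
split.
{ intros a Ha. destruct (Aexists (a * T) Ha) as [th [Hth HA]].
  exists (Bf th / T). split.
  - apply fromparam; auto. rewrite HA; ring.
  - intros k' Hk'. destruct (param T a k' HT Hk') as [th' [Hth' [Ha' Hk'']]].
    assert (th = th') by (apply Ainj; auto; rewrite HA, <- Ha'; ring).
    subst th'. rewrite <- Hk''. field. lra. }
intros ku Hku.
split; [|split; [|split]].
- intros x y Hxy Hy.
  destruct (param T x (ku x) HT (Hku x (L x ltac:(lra)))) as [tx [Htx [Ax Bx]]].
  destruct (param T y (ku y) HT (Hku y (L y ltac:(lra)))) as [ty [Hty [Ay By]]].
  assert (O : ty < tx) by (apply ord; auto; rewrite <- Ax, <- Ay; nra).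
  pose proof (Binc ty tx ltac:(lra) O ltac:(lra)). nra.
- assert (C : forall x y t, x < y -> y < / T -> 0 <= t <= 1 ->
     ku (t * x + (1 - t) * y) <= t * ku x + (1 - t) * ku y).
  { intros x y t Hxy Hy Ht.
    destruct (Req_dec t 0) as [->|H0].
    { replace (0 * x + (1 - 0) * y) with y by ring. lra. }
    destruct (Req_dec t 1) as [->|H1].
    { replace (1 * x + (1 - 1) * y) with x by ring. lra. }
    set (z := t * x + (1 - t) * y).
    assert (Hz1 : x < z) by (unfold z; nra).
    assert (Hz2 : z < y) by (unfold z; nra).
    pose proof (core T ku x z y HT Hku Hz1 Hz2 Hy) as Hc.
    replace (y - z) with (t * (y - x)) in Hc by (unfold z; ring).
    replace (z - x) with ((1 - t) * (y - x)) in Hc by (unfold z; ring).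
    apply (Rmult_le_reg_r (y - x)); [lra|]. nra. }
  intros x y t Hx Hy Ht.
  destruct (Rtotal_order x y) as [H|[H|H]].
  + apply C; auto.
  + subst. replace (t * y + (1 - t) * y) with y by ring. lra.
  + pose proof (C y x (1 - t) H Hx ltac:(lra)).
    replace (t * x + (1 - t) * y) with ((1 - t) * y + (1 - (1 - t)) * x) by ring. lra.
- unfold is_lim. apply filterlim_locally. intros eps.
  simpl. exists (- (PI / (T * eps)) - 1).
  intros a Ha.
  pose proof (PI_RGT_0). pose proof (cond_pos eps).
  assert (0 < PI / (T * eps)) by (apply Rdiv_lt_0_compat; nra).
  assert (Ha0 : a < 0) by lra.
  pose proof (Hku a (L a ltac:(assert (0 < / T) by (apply Rinv_0_lt_compat; lra); lra))) as Hk.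
  pose proof (kbound T a (ku a) HT Hk) as Hb. destruct Hk as [Hk _].
  rewrite Rabs_left in * by lra.
  change (Rabs (ku a / - a - 1) < eps).
  apply Rabs_def1.
  + apply (Rmult_lt_reg_r (- a)); [lra|]. field_simplify; [|lra].
    assert (PI / T < eps * - a).
    { apply (Rmult_lt_reg_r (/ eps)). apply Rinv_0_lt_compat; lra.
      replace (PI / T * / eps) with (PI / (T * eps)) by (field; lra).
      replace (eps * - a * / eps) with (- a) by (field; lra). lra. }
    lra.
  + apply (Rmult_lt_reg_r (- a)); [lra|]. field_simplify; [|lra]. nra.
- apply filterlim_locally. intros eps.
  exists eps. intros a Hball Hlt.
  change (Rabs (a - / T) < eps) in Hball.
  change (Rabs (ku a - / T) < eps).
  pose proof (Hku a (L a Hlt)) as Hk.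
  pose proof (kpa T a (ku a) HT Hk) as Hp. destruct Hk as [Hk _].
  pose proof (Rle_abs a).
  rewrite Rabs_left in Hball by lra.
  assert (ku a + a <= 2 / T) by (apply (Rmult_le_reg_l T); auto; field_simplify; lra).
  apply Rabs_def1; unfold Rdiv in *; lra.
Qed.
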